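(* Let $G$ and $H$ be finite simple graphs without isolated vertices, each of order at least three, and let $f=(V_0,V_1,V_2)$ be a $\gamma_{tR}(G\times H)$-function with $|V_2|$ as large as possible among all $\gamma_{tR}(G\times H)$-functions. The following are equivalent: (i) $G$ and $H$ are both triangle centered; (ii) $\gamma_{tR}(G\times H)=6$; (iii) $|V_1\cup V_2|=3$.
   Context: A total Roman dominating function on a graph $X$ without isolated vertices is a map $f:V(X)\to\{0,1,2\}$, written $f=(V_0,V_1,V_2)$ with $V_i=\{v:f(v)=i\}$, such that every vertex of $V_0$ has a neighbor in $V_2$ and the subgraph induced by $V_1\cup V_2$ has no isolated vertices; $\gamma_{tR}(X)$ is the minimum of $\sum_v f(v)$ over such $f$, and a $\gamma_{tR}(X)$-function is one attaining this minimum. $G$ is triangle centered if it contains a triangle $xyz$ such that every vertex of $G$ is adjacent to at least two vertices of $\{x,y,z\}$. The direct product $G\times H$ has vertex set $V(G)\times V(H)$, with $(g,h)(g',h')$ an edge iff $gg'\in E(G)$ and $hh'\in E(H)$. *)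

(* Defs.v *)
From mathcomp Require Import all_boot.
Set Implicit Arguments. Unset Strict Implicit. Unset Printing Implicit Defensive.

Definition simple_graph (V : finType) (e : rel V) : Prop :=
  symmetric e /\ irreflexive e.

Definition no_isolated (V : finType) (e : rel V) : Prop :=
  forall v, exists u, e v u.

Definition direct_prod (V W : finType) (e : rel V) (d : rel W) : rel (V * W) :=
  fun p q => e p.1 q.1 && d p.2 q.2.

Definition fval (V : finType) (f : {ffun V -> 'I_3}) (v : V) : nat := f v.

Definition is_TRDF (V : finType) (e : rel V) (f : {ffun V -> 'I_3}) : Prop :=
  (forall v, fval f v = 0 -> exists u, e v u /\ fval f u = 2) /\
  (forall v, 0 < fval f v -> exists u, e v u /\ 0 < fval f u).

Definition is_TRDFb (V : finType) (e : rel V) (f : {ffun V -> 'I_3}) : bool :=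
  [forall v, (fval f v == 0) ==> [exists u, e v u && (fval f u == 2)]] &&
  [forall v, (0 < fval f v) ==> [exists u, e v u && (0 < fval f u)]].

Definition weight (V : finType) (f : {ffun V -> 'I_3}) : nat :=
  \sum_(v : V) fval f v.

(* gamma_tR: minimum weight of a TRDF (the default 2*#|V| is attained by the
   constant-2 function when there are no isolated vertices). *)
Definition gamma_tR (V : finType) (e : rel V) : nat :=
  \big[minn/(2 * #|V|)]_(f : {ffun V -> 'I_3} | is_TRDFb e f) weight f.

Definition is_gamma_tR_function (V : finType) (e : rel V) (f : {ffun V -> 'I_3}) : Prop :=
  is_TRDF e f /\ weight f = gamma_tR e.

Definition Vi (V : finType) (f : {ffun V -> 'I_3}) (i : nat) : {set V} :=
  [set v | fval f v == i].

Definition triangle_centered (V : finType) (e : rel V) : Prop :=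
  exists x y z : V, [/\ e x y, e y z & e x z] /\
    forall v, 2 <= (e v x) + (e v y) + (e v z).

(* Main.v *)
Require Import Defs.
From mathcomp Require Import all_boot zify.
Set Implicit Arguments. Unset Strict Implicit. Unset Printing Implicit Defensive.

Lemma card_list (T : finType) (A : {pred T}) (s : seq T) :
  uniq s -> all (fun x => x \in A) s -> size s <= #|A|.
Proof.
move=> u sub; rewrite -(card_uniqP u); apply: subset_leq_card.
by apply/subsetP => x xs; move/allP: sub; apply.
Qed.

Lemma pick3 (T : finType) : 3 <= #|T| -> forall a b : T, exists c, c != a /\ c != b.
Proof.
move=> H a b; case: (pickP (fun c => (c != a) && (c != b))) => [c /andP[]|N].
  by exists c.
have: #|T| <= #|[set a; b]|.
  rewrite -cardsT; apply: subset_leq_card; apply/subsetP => c _.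
  by move: (N c); rewrite !inE; case: (c == a); case: (c == b).
by rewrite cards2; case: (a != b) => /=; move=> /(leq_trans H).
Qed.

Lemma min_le_seq (I : eqType) (s : seq I) (P : pred I) (F : I -> nat) x0 j :
  j \in s -> P j -> \big[minn/x0]_(i <- s | P i) F i <= F j.
Proof.
move=> + Pj; elim: s => //= i s IH; rewrite in_cons big_cons.
case/orP => [/eqP <-|/IH H]; first by rewrite Pj geq_minl.
case: (P i) => //; exact: leq_trans (geq_minr _ _) H.
Qed.

Lemma min_le (I : finType) (P : pred I) (F : I -> nat) x0 j :
  P j -> \big[minn/x0]_(i | P i) F i <= F j.
Proof. by apply: min_le_seq; rewrite mem_index_enum. Qed.

Lemma fval_lt3 (V : finType) (f : {ffun V -> 'I_3}) v : fval f v < 3.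
Proof. exact: ltn_ord. Qed.

Lemma inVi (V : finType) (f : {ffun V -> 'I_3}) i v : (v \in Vi f i) = (fval f v == i).
Proof. by rewrite inE. Qed.

Lemma sum_bool (V : finType) (p : pred V) : \sum_(v : V) (p v : nat) = #|[set v | p v]|.
Proof.
rewrite -sum1_card [RHS]big_mkcond /=; apply: eq_bigr => v _; by rewrite inE; case: (p v).
Qed.

Lemma weightE (V : finType) (f : {ffun V -> 'I_3}) :
  weight f = #|Vi f 1| + 2 * #|Vi f 2|.
Proof.
rewrite /weight.
have -> : \sum_(v : V) fval f v = \sum_(v : V) (nat_of_bool (fval f v == 1) + 2 * nat_of_bool (fval f v == 2)).
  by apply: eq_bigr => v _; have := fval_lt3 f v; case: (fval f v) => [|[|[|]]].
rewrite big_split /= -big_distrr /= !sum_bool; congr (#|_| + 2 * #|_|); apply/setP => v; by rewrite !inE.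
Qed.

Lemma cardS12 (V : finType) (f : {ffun V -> 'I_3}) :
  #|Vi f 1 :|: Vi f 2| = #|Vi f 1| + #|Vi f 2|.
Proof.
rewrite cardsU; have -> : Vi f 1 :&: Vi f 2 = set0.
  by apply/setP => v; rewrite !inE; case: (fval f v) => [|[|[|]]].
by rewrite cards0 subn0.
Qed.

Lemma TRDF_b (V : finType) (e : rel V) f : is_TRDF e f -> is_TRDFb e f.
Proof.
case=> H0 H1; apply/andP; split; apply/forallP => v; apply/implyP.
  by move/eqP/H0 => [u [eu fu]]; apply/existsP; exists u; rewrite eu fu eqxx.
by move/H1 => [u [eu fu]]; apply/existsP; exists u; rewrite eu fu.
Qed.

Lemma gamma_le (V : finType) (e : rel V) f : is_TRDF e f -> gamma_tR e <= weight f.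
Proof. by move/TRDF_b => H; apply: min_le. Qed.

Lemma TC_of (V : finType) (e : rel V) g1 g2 : simple_graph e -> 3 <= #|V| ->
  e g1 g2 -> (forall g, g != g1 -> g != g2 -> e g g1 && e g g2) -> triangle_centered e.
Proof.
move=> [sym irr] H3 e12 Hg; have [g3 [n1 n2]] := pick3 H3 g1 g2.
have /andP[e31 e32] := Hg g3 n1 n2.
exists g1, g2, g3; split; first by split => //; rewrite sym.
move=> v; case: (eqVneq v g1) => [->|v1].
  by rewrite irr e12 (sym g1 g3) e31.
case: (eqVneq v g2) => [->|v2].
  by rewrite irr (sym g2 g1) e12 (sym g2 g3) e32.
by have /andP[-> ->] := Hg v v1 v2; rewrite leq_addr.
Qed.

Lemma TC_construct (V W : finType) (e : rel V) (d : rel W) :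
  simple_graph e -> simple_graph d -> triangle_centered e -> triangle_centered d ->
  exists g, [/\ is_TRDF (direct_prod e d) g, weight g = 6 & #|Vi g 2| = 3].
Proof.
move=> [syme irre] [symd irrd] [x [y [z [[exy eyz exz] Hv]]]] [x' [y' [z' [[dxy dyz dxz] Hw]]]].
pose S := [set (x, x'); (y, y'); (z, z')].
pose g : {ffun (V * W)%type -> 'I_3} :=
  [ffun p => if p \in S then @Ordinal 3 2 isT else @Ordinal 3 0 isT].
have gE : forall p, fval g p = if p \in S then 2 else 0.
  by move=> p; rewrite /fval ffunE; case: ifP.
have nxy : x != y by apply: contraTneq exy => ->; rewrite irre.
have nyz : y != z by apply: contraTneq eyz => ->; rewrite irre.
have nxz : x != z by apply: contraTneq exz => ->; rewrite irre.
have V1 : Vi g 1 = set0 by apply/setP => p; rewrite !inE gE; case: ifP.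
have V2 : Vi g 2 = S by apply/setP => p; rewrite inE gE; case: ifP.
have cS : #|S| = 3.
  apply/eqP; rewrite eqn_leq; apply/andP; split.
    rewrite /S; apply: (leq_trans (leq_card_setU _ _)); rewrite cards1 addn1 ltnS.
    by apply: (leq_trans (leq_card_setU _ _)); rewrite !cards1.
  have -> : 3 = size [:: (x, x'); (y, y'); (z, z')] by [].
  apply: card_list; last by rewrite /= !inE !eqxx !orbT.
  by rewrite /= !inE !xpair_eqE negb_or (negbTE nxy) (negbTE nyz) (negbTE nxz).
exists g; split; last by rewrite V2.
  split => v.
    rewrite gE; case: ifP => // vS _.
    have := Hv v.1; have := Hw v.2; rewrite /direct_prod.
    case E1: (e v.1 x); case E2: (e v.1 y); case E3: (e v.1 z);
    case D1: (d v.2 x'); case D2: (d v.2 y'); case D3: (d v.2 z') => //= _ _;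
    solve [ exists (x, x'); split; [by rewrite /direct_prod /= E1 D1 | by rewrite gE !inE eqxx ?orbT]
          | exists (y, y'); split; [by rewrite /direct_prod /= E2 D2 | by rewrite gE !inE eqxx ?orbT]
          | exists (z, z'); split; [by rewrite /direct_prod /= E3 D3 | by rewrite gE !inE eqxx ?orbT] ].
  rewrite gE; case: ifP => // vS _.
  move: vS; rewrite /S !inE => /orP[/orP[]|] /eqP ->.
  - by exists (y, y'); rewrite gE !inE eqxx ?orbT /direct_prod /= exy dxy.
  - by exists (z, z'); rewrite gE !inE eqxx ?orbT /direct_prod /= eyz dyz.
  - by exists (x, x'); rewrite gE !inE eqxx ?orbT /direct_prod /= syme exz symd dxz.
by rewrite weightE V1 V2 cS cards0.
Qed.

Lemma inV1 (P : finType) (E : rel P) f v : is_TRDF E f ->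
  fval f v != 2 -> (forall u, fval f u = 2 -> ~~ E v u) -> fval f v = 1.
Proof.
move=> [T0 _] n2 H; have := fval_lt3 f v; move: n2.
case Fv: (fval f v) => [|[|[|]]] //= _ _.
by have [u [Evu /H]] := T0 _ Fv; rewrite Evu.
Qed.

Lemma V2_0 (V W : finType) (e : rel V) (d : rel W) f :
  is_TRDF (direct_prod e d) f -> #|Vi f 2| = 0 -> #|V| * #|W| <= #|Vi f 1|.
Proof.
move=> T /cards0_eq V20.
have H2 : forall u, fval f u = 2 -> False.
  move=> u Fu; have : u \in Vi f 2 by rewrite inVi Fu.
  by rewrite V20 inE.
have -> : Vi f 1 = setT.
  apply/setP => v; rewrite inVi inE; apply/eqP; apply: (inV1 T).
    by apply/negP => /eqP /H2.
  by move=> u /H2.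
by rewrite cardsT card_prod.
Qed.

Lemma V2_1 (V W : finType) (e : rel V) (d : rel W) f :
  simple_graph e -> simple_graph d -> 3 <= #|V| -> 3 <= #|W| ->
  is_TRDF (direct_prod e d) f -> #|Vi f 2| = 1 -> 5 <= #|Vi f 1|.
Proof.
move=> [syme irre] [symd irrd] HV HW T /eqP /cards1P [[ga ha] HA].
have H2 : forall u, (fval f u == 2) = (u == (ga, ha)) by move=> u; rewrite -inVi HA inE.
have [h1 [h1a _]] := pick3 HW ha ha.
have [h2 [h2a h21]] := pick3 HW ha h1.
have [g1 [g1a _]] := pick3 HV ga ga.
have [g2 [g2a g21]] := pick3 HV ga g1.
have Fa : fval f (ga, ha) = 2 by apply/eqP; rewrite H2.
have Fa0 : 0 < fval f (ga, ha) by rewrite Fa.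
have [[n1 n2] [Ean Fn]] := T.2 (ga, ha) Fa0.
move: Ean; rewrite /direct_prod /= => /andP [en dn].
have n1a : n1 != ga by apply: contraTneq en => ->; rewrite irre.
have n2a : n2 != ha by apply: contraTneq dn => ->; rewrite irrd.
have inV1' : forall v, v != (ga, ha) -> ~~ direct_prod e d v (ga, ha) -> v \in Vi f 1.
  move=> v va nE; rewrite inVi; apply/eqP; apply: (inV1 T); first by rewrite H2.
  by move=> u /eqP; rewrite H2 => /eqP ->.
have -> : 5 = size [:: (ga, h1); (ga, h2); (g1, ha); (g2, ha); (n1, n2)] by [].
apply: card_list.
  rewrite /= !inE !xpair_eqE !(eq_sym ga) !(eq_sym ha) (eq_sym h1 h2) (eq_sym g1 g2).
  by rewrite (negbTE h21) (negbTE g21) (negbTE g1a) (negbTE g2a) (negbTE h1a) (negbTE h2a)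
    (negbTE n1a) (negbTE n2a) /= ?andbF.
have m1 : (ga, h1) \in Vi f 1.
  by apply: inV1'; [rewrite xpair_eqE negb_and h1a orbT | rewrite /direct_prod /= irre].
have m2 : (ga, h2) \in Vi f 1.
  by apply: inV1'; [rewrite xpair_eqE negb_and h2a orbT | rewrite /direct_prod /= irre].
have m3 : (g1, ha) \in Vi f 1.
  by apply: inV1'; [rewrite xpair_eqE negb_and g1a | rewrite /direct_prod /= irrd andbF].
have m4 : (g2, ha) \in Vi f 1.
  by apply: inV1'; [rewrite xpair_eqE negb_and g2a | rewrite /direct_prod /= irrd andbF].
have m5 : (n1, n2) \in Vi f 1.
  rewrite inVi; have := fval_lt3 f (n1, n2); move: Fn.
  have : fval f (n1, n2) != 2 by rewrite H2 xpair_eqE negb_and n1a.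
  by case: (fval f (n1, n2)) => [|[|[|]]].
by rewrite /= m1 m2 m3 m4 m5.
Qed.

Lemma two_elems (T : finType) (A : {set T}) c c' x :
  #|A| <= 2 -> c \in A -> c' \in A -> c != c' -> x \in A -> (x == c) || (x == c').
Proof.
move=> HA cA c'A ncc xA; apply/negP => /negP; rewrite negb_or => /andP [xc xc'].
have : size [:: c; c'; x] <= #|A|.
  apply: card_list; last by rewrite /= cA c'A xA.
  by rewrite /= !inE !negb_or ncc (eq_sym c x) (eq_sym c' x) xc xc'.
by move=> /leq_trans /(_ HA).
Qed.

Lemma V2_2 (V W : finType) (e : rel V) (d : rel W) f :
  simple_graph e -> simple_graph d -> 3 <= #|V| -> 3 <= #|W| ->
  is_TRDF (direct_prod e d) f -> #|Vi f 2| = 2 ->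
  2 <= #|Vi f 1| /\ (#|Vi f 1| <= 2 -> triangle_centered e /\ triangle_centered d).
Proof.
move=> [syme irre] [symd irrd] HV HW T /eqP /cards2P [[g1 h1] [[g2 h2] [nab HA]]].
have H2 : forall u, (fval f u == 2) = (u == (g1, h1)) || (u == (g2, h2)).
  by move=> u; rewrite -inVi HA !inE.
have inV1' : forall v, v != (g1, h1) -> v != (g2, h2) ->
    ~~ direct_prod e d v (g1, h1) -> ~~ direct_prod e d v (g2, h2) -> v \in Vi f 1.
  move=> v va vb Ea Eb; rewrite inVi; apply/eqP; apply: (inV1 T).
    by rewrite H2 negb_or va vb.
  by move=> u /eqP; rewrite H2 => /orP [] /eqP ->.
have F0 : forall v, v \notin Vi f 1 -> v != (g1, h1) -> v != (g2, h2) ->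
    direct_prod e d v (g1, h1) || direct_prod e d v (g2, h2).
  move=> v v1 va vb; apply/negP => /negP; rewrite negb_or => /andP [Ea Eb].
  by move: v1; rewrite inV1'.
have Pos : forall u, 0 < fval f u -> [|| u \in Vi f 1, u == (g1, h1) | u == (g2, h2)].
  move=> u; rewrite inVi -H2; have := fval_lt3 f u.
  by case: (fval f u) => [|[|[|]]].
have Fa0 : 0 < fval f (g1, h1).
  have : fval f (g1, h1) == 2 by rewrite H2 eqxx.
  by move/eqP ->.
have Fb0 : 0 < fval f (g2, h2).
  have : fval f (g2, h2) == 2 by rewrite H2 eqxx orbT.
  by move/eqP ->.
case: (eqVneq g1 g2) => [eg|ng]; case: (eqVneq h1 h2) => [eh|nh].
- by move: nab; rewrite eg eh eqxx.
-
  subst g2.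
  have [h3 [h31 h32]] := pick3 HW h1 h2.
  have mc : (g1, h3) \in Vi f 1.
    by apply: inV1'; rewrite ?xpair_eqE ?negb_and ?h31 ?h32 ?orbT // /direct_prod /= irre.
  have [[n1 n2] [Ean Fn]] := T.2 _ Fa0.
  move: Ean; rewrite /direct_prod /= => /andP [en dn].
  have n1g : n1 != g1 by apply: contraTneq en => ->; rewrite irre.
  have mn : (n1, n2) \in Vi f 1.
    by move: (Pos _ Fn); rewrite !xpair_eqE (negbTE n1g) /= orbF.
  have ncn : (g1, h3) != (n1, n2) by rewrite xpair_eqE negb_and eq_sym n1g.
  split.
    have -> : 2 = size [:: (g1, h3); (n1, n2)] by [].
    by apply: card_list; rewrite /= ?mc ?mn // inE andbT.
  move=> H1le.
  have Hx := fun x => @two_elems _ _ _ _ x H1le mc mn ncn.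
  have [[m1 m2] [Ebm Fm]] := T.2 _ Fb0.
  move: Ebm; rewrite /direct_prod /= => /andP [em dm].
  have m1g : m1 != g1 by apply: contraTneq em => ->; rewrite irre.
  have mm : (m1, m2) \in Vi f 1.
    by move: (Pos _ Fm); rewrite !xpair_eqE (negbTE m1g) /= orbF.
  move: (Hx _ mm); rewrite !xpair_eqE (negbTE m1g) /= => /andP [/eqP em1 /eqP em2].
  subst m1 m2.
  have Fc0 : 0 < fval f (g1, h3) by move: mc; rewrite inVi => /eqP ->.
  have [[k1 k2] [Eck Fk]] := T.2 _ Fc0.
  move: Eck; rewrite /direct_prod /= => /andP [ek dk].
  have k1g : k1 != g1 by apply: contraTneq ek => ->; rewrite irre.
  have mk : (k1, k2) \in Vi f 1.
    by move: (Pos _ Fk); rewrite !xpair_eqE (negbTE k1g) /= orbF.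
  move: (Hx _ mk); rewrite !xpair_eqE (negbTE k1g) /= => /andP [/eqP ek1 /eqP ek2].
  subst k1 k2.
  have n21 : n2 != h1 by apply: contraTneq dn => ->; rewrite irrd.
  have n22 : n2 != h2 by apply: contraTneq dm => ->; rewrite irrd.
  have n23 : n2 != h3 by apply: contraTneq dk => ->; rewrite irrd.
  have v1 : (g1, n2) \notin Vi f 1.
    by apply/negP => /Hx; rewrite !xpair_eqE eqxx (negbTE n23) eq_sym (negbTE n1g).
  have := F0 _ v1.
  by rewrite !xpair_eqE negb_and n21 negb_and n22 orbT /direct_prod /= irre => /(_ isT isT).
-
  subst h2.
  have [g3 [g31 g32]] := pick3 HV g1 g2.
  have mc : (g3, h1) \in Vi f 1.
    by apply: inV1'; rewrite ?xpair_eqE ?negb_and ?g31 ?g32 ?orbT //= irrd ?orbT.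
  have [[n1 n2] [Ean Fn]] := T.2 _ Fa0.
  move: Ean; rewrite /direct_prod /= => /andP [en dn].
  have n2h : n2 != h1 by apply: contraTneq dn => ->; rewrite irrd.
  have mn : (n1, n2) \in Vi f 1.
    by move: (Pos _ Fn); rewrite !xpair_eqE (negbTE n2h) /= ?andbF ?orbF.
  have ncn : (g3, h1) != (n1, n2) by rewrite xpair_eqE negb_and (eq_sym h1) n2h orbT.
  split.
    have -> : 2 = size [:: (g3, h1); (n1, n2)] by [].
    by apply: card_list; rewrite /= ?mc ?mn // inE andbT.
  move=> H1le.
  have Hx := fun x => @two_elems _ _ _ _ x H1le mc mn ncn.
  have [[m1 m2] [Ebm Fm]] := T.2 _ Fb0.
  move: Ebm; rewrite /direct_prod /= => /andP [em dm].
  have m2h : m2 != h1 by apply: contraTneq dm => ->; rewrite irrd.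
  have mm : (m1, m2) \in Vi f 1.
    by move: (Pos _ Fm); rewrite !xpair_eqE (negbTE m2h) /= ?andbF ?orbF.
  move: (Hx _ mm); rewrite !xpair_eqE (negbTE m2h) /= ?andbF => /andP [/eqP em1 /eqP em2].
  subst m1 m2.
  have Fc0 : 0 < fval f (g3, h1) by move: mc; rewrite inVi => /eqP ->.
  have [[k1 k2] [Eck Fk]] := T.2 _ Fc0.
  move: Eck; rewrite /direct_prod /= => /andP [ek dk].
  have k2h : k2 != h1 by apply: contraTneq dk => ->; rewrite irrd.
  have mk : (k1, k2) \in Vi f 1.
    by move: (Pos _ Fk); rewrite !xpair_eqE (negbTE k2h) /= ?andbF ?orbF.
  move: (Hx _ mk); rewrite !xpair_eqE (negbTE k2h) /= ?andbF => /andP [/eqP ek1 /eqP ek2].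
  subst k1 k2.
  have n11 : n1 != g1 by apply: contraTneq en => ->; rewrite irre.
  have n12 : n1 != g2 by apply: contraTneq em => ->; rewrite irre.
  have n13 : n1 != g3 by apply: contraTneq ek => ->; rewrite irre.
  have v1 : (n1, h1) \notin Vi f 1.
    by apply/negP => /Hx; rewrite !xpair_eqE (negbTE n13) (eq_sym h1) (negbTE n2h) andbF.
  have := F0 _ v1.
  by rewrite !xpair_eqE eqxx !andbT n11 n12 /direct_prod /= irrd !andbF => /(_ isT isT).
-
  have mc : (g1, h2) \in Vi f 1.
    by apply: inV1'; rewrite ?xpair_eqE ?negb_and /= ?irre ?irrd ?(eq_sym h2 h1) ?(eq_sym g2 g1) ?nh ?ng ?orbT.
  have mc' : (g2, h1) \in Vi f 1.
    by apply: inV1'; rewrite ?xpair_eqE ?negb_and /= ?irre ?irrd ?(eq_sym h2 h1) ?(eq_sym g2 g1) ?nh ?ng ?orbT.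
  have ncc : (g1, h2) != (g2, h1) by rewrite xpair_eqE negb_and ng.
  split.
    have -> : 2 = size [:: (g1, h2); (g2, h1)] by [].
    by apply: card_list; rewrite /= ?mc ?mc' // inE andbT.
  move=> H1le.
  have Hx := fun x => @two_elems _ _ _ _ x H1le mc mc' ncc.
  have [[n1 n2] [Ean Fn]] := T.2 _ Fa0.
  move: Ean; rewrite /direct_prod /= => /andP [en dn].
  have n1g : n1 != g1 by apply: contraTneq en => ->; rewrite irre.
  have n2h : n2 != h1 by apply: contraTneq dn => ->; rewrite irrd.
  have nb : (n1, n2) == (g2, h2).
    move: (Pos _ Fn); rewrite !xpair_eqE (negbTE n1g) /= => /orP [] // /Hx.
    by rewrite !xpair_eqE (negbTE n1g) (negbTE n2h) /= andbF.
  move: nb; rewrite xpair_eqE => /andP [/eqP e1 /eqP e2]; subst n1 n2.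
  split.
    apply: (TC_of (conj syme irre) HV en) => g gg1 gg2; apply/andP; split.
      have v1 : (g, h2) \notin Vi f 1.
        by apply/negP => /Hx; rewrite !xpair_eqE (negbTE gg1) (negbTE gg2).
      have := F0 _ v1; rewrite !xpair_eqE (negbTE gg1) (negbTE gg2) /=.
      by rewrite /direct_prod /= irrd andbF orbF => /(_ isT isT) /andP [].
    have v1 : (g, h1) \notin Vi f 1.
      by apply/negP => /Hx; rewrite !xpair_eqE (negbTE gg1) (negbTE gg2).
    have := F0 _ v1; rewrite !xpair_eqE (negbTE gg1) (negbTE gg2) /=.
    by rewrite /direct_prod /= irrd andbF /= => /(_ isT isT) /andP [].
  apply: (TC_of (conj symd irrd) HW dn) => h hh1 hh2; apply/andP; split.
    have v1 : (g2, h) \notin Vi f 1.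
      by apply/negP => /Hx; rewrite !xpair_eqE (negbTE hh1) (negbTE hh2) !andbF.
    have := F0 _ v1; rewrite !xpair_eqE (negbTE hh1) (negbTE hh2) /= !andbF.
    by rewrite /direct_prod /= irre /= orbF => /(_ isT isT) /andP [].
  have v1 : (g1, h) \notin Vi f 1.
    by apply/negP => /Hx; rewrite !xpair_eqE (negbTE hh1) (negbTE hh2) !andbF.
  have := F0 _ v1; rewrite !xpair_eqE (negbTE hh1) (negbTE hh2) /= !andbF.
  by rewrite /direct_prod /= irre /= => /(_ isT isT) /andP [].
Qed.

Lemma TC_of3 (V : finType) (e : rel V) a b c : irreflexive e ->
  (forall g, 2 <= e g a + e g b + e g c) -> triangle_centered e.
Proof.
move=> irr H; exists a, b, c; split => //.
have := H a; have := H b; rewrite !irr.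
by case: (e a b); case: (e a c); case: (e b c); case: (e b a).
Qed.

Definition Shyp (V W : finType) (e : rel V) (d : rel W) (S : {set (V * W)%type}) a b c :=
  (forall v, v \in S -> [|| v == a, v == b | v == c]) /\
  [/\ a \in S, b \in S, c \in S,
      forall v, v \notin S -> exists2 u, u \in S & direct_prod e d v u
    & forall v, v \in S -> exists2 u, u \in S & direct_prod e d v u].

Lemma Shyp_perm1 (V W : finType) (e : rel V) (d : rel W) S a b c :
  Shyp e d S a b c -> Shyp e d S b a c.
Proof.
case=> HS [aS bS cS H0 Hn]; split => // v /HS.
by case: (v == a); case: (v == b); case: (v == c).
Qed.

Lemma Shyp_perm2 (V W : finType) (e : rel V) (d : rel W) S a b c :
  Shyp e d S a b c -> Shyp e d S a c b.
Proof.
case=> HS [aS bS cS H0 Hn]; split => // v /HS.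
by case: (v == a); case: (v == b); case: (v == c).
Qed.

Lemma D1 (V W : finType) (e : rel V) (d : rel W) S a b c :
  simple_graph e -> simple_graph d -> Shyp e d S a b c -> a.1 = b.1 -> False.
Proof.
move=> [syme irre] [symd irrd]; case: a => a1 a2; case: b => b1 b2; case: c => c1 c2.
case=> HS [aS bS cS H0 Hn] /= eab; subst b1.
have [u uS] := Hn _ aS; move: (HS _ uS) => /or3P [] /eqP -> //=;
  rewrite /direct_prod /= ?irre // => /andP [ea dac].
have [u' uS'] := Hn _ bS; move: (HS _ uS') => /or3P [] /eqP -> //=;
  rewrite /direct_prod /= ?irre // => /andP [_ dbc].
have vS : (a1, c2) \notin S.
  apply/negP => /HS; rewrite !xpair_eqE !eqxx /= ?andbT.
  have -> : (c2 == a2) = false by apply/negP => /eqP E; move: dac; rewrite E irrd.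
  have -> : (c2 == b2) = false by apply/negP => /eqP E; move: dbc; rewrite E irrd.
  by move=> /eqP E; move: ea; rewrite E irre.
have [w wS] := H0 _ vS; move: (HS _ wS) => /or3P [] /eqP -> ;
  by rewrite /direct_prod /= ?irre ?irrd ?andbF.
Qed.

Lemma D2 (V W : finType) (e : rel V) (d : rel W) S a b c :
  simple_graph e -> simple_graph d -> Shyp e d S a b c -> a.2 = b.2 -> False.
Proof.
move=> [syme irre] [symd irrd]; case: a => a1 a2; case: b => b1 b2; case: c => c1 c2.
case=> HS [aS bS cS H0 Hn] /= eab; subst b2.
have [u uS] := Hn _ aS; move: (HS _ uS) => /or3P [] /eqP -> //=;
  rewrite /direct_prod /= ?irrd ?andbF // => /andP [eac dac].
have [u' uS'] := Hn _ bS; move: (HS _ uS') => /or3P [] /eqP -> //=;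
  rewrite /direct_prod /= ?irrd ?andbF // => /andP [ebc _].
have vS : (c1, a2) \notin S.
  apply/negP => /HS; rewrite !xpair_eqE !eqxx /= ?andbT.
  have -> : (c1 == a1) = false by apply/negP => /eqP E; move: eac; rewrite E irre.
  have -> : (c1 == b1) = false by apply/negP => /eqP E; move: ebc; rewrite E irre.
  by move=> /eqP E; move: dac; rewrite E irrd.
have [w wS] := H0 _ vS; move: (HS _ wS) => /or3P [] /eqP -> ;
  by rewrite /direct_prod /= ?irre ?irrd ?andbF.
Qed.

Lemma D3 (V W : finType) (e : rel V) (d : rel W) S a b c :
  simple_graph e -> simple_graph d -> 3 <= #|W| -> Shyp e d S a b c ->
  a.1 != b.1 -> a.1 != c.1 -> a.2 != b.2 -> a.2 != c.2 ->
  forall g, ~~ e g b.1 -> ~~ e g c.1 -> False.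
Proof.
move=> [syme irre] [symd irrd] HW; case: a => a1 a2; case: b => b1 b2; case: c => c1 c2.
case=> HS [aS bS cS H0 Hn] /= n1b n1c n2b n2c g gb gc.
case: (eqVneq g a1) => [ga|ga].
  subst g; have [h [ha _]] := pick3 HW a2 a2.
  have vS : (a1, h) \notin S.
    apply/negP => /HS; rewrite !xpair_eqE (negbTE ha) (negbTE n1b) (negbTE n1c) ?andbF //=.
  have [w wS] := H0 _ vS; move: (HS _ wS) => /or3P [] /eqP -> ;
    by rewrite /direct_prod /= ?irre ?(negbTE gb) ?(negbTE gc).
have vS : (g, a2) \notin S.
  apply/negP => /HS; rewrite !xpair_eqE (negbTE ga) (negbTE n2b) (negbTE n2c) ?andbF //=.
have [w wS] := H0 _ vS; move: (HS _ wS) => /or3P [] /eqP -> ;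
  by rewrite /direct_prod /= ?irrd ?andbF ?(negbTE gb) ?(negbTE gc).
Qed.

Lemma D4 (V W : finType) (e : rel V) (d : rel W) S a b c :
  simple_graph e -> simple_graph d -> 3 <= #|V| -> Shyp e d S a b c ->
  a.1 != b.1 -> a.1 != c.1 -> a.2 != b.2 -> a.2 != c.2 ->
  forall h, ~~ d h b.2 -> ~~ d h c.2 -> False.
Proof.
move=> [syme irre] [symd irrd] HV; case: a => a1 a2; case: b => b1 b2; case: c => c1 c2.
case=> HS [aS bS cS H0 Hn] /= n1b n1c n2b n2c h hb hc.
case: (eqVneq h a2) => [ha|ha].
  subst h; have [g [ga _]] := pick3 HV a1 a1.
  have vS : (g, a2) \notin S.
    apply/negP => /HS; rewrite !xpair_eqE (negbTE ga) (negbTE n2b) (negbTE n2c) ?andbF //=.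
  have [w wS] := H0 _ vS; move: (HS _ wS) => /or3P [] /eqP -> ;
    by rewrite /direct_prod /= ?irrd ?andbF ?(negbTE hb) ?(negbTE hc) ?andbF.
have vS : (a1, h) \notin S.
  apply/negP => /HS; rewrite !xpair_eqE (negbTE ha) (negbTE n1b) (negbTE n1c) ?andbF //=.
have [w wS] := H0 _ vS; move: (HS _ wS) => /or3P [] /eqP -> ;
  by rewrite /direct_prod /= ?irre ?(negbTE hb) ?(negbTE hc) ?andbF.
Qed.

Lemma V2_3 (V W : finType) (e : rel V) (d : rel W) f :
  simple_graph e -> simple_graph d -> 3 <= #|V| -> 3 <= #|W| ->
  is_TRDF (direct_prod e d) f -> #|Vi f 1| = 0 -> #|Vi f 2| = 3 ->
  triangle_centered e /\ triangle_centered d.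
Proof.
move=> se sd HV HW T C1 C2.
have /card_gt2P [x [y [z [[xS yS zS] [nxy nyz nzx]]]]] : 2 < #|Vi f 2| by rewrite C2.
have V1e := cards0_eq C1.
have HS : forall v, v \in Vi f 2 -> [|| v == x, v == y | v == z].
  move=> v vS; apply/negP => /negP; rewrite !negb_or => /and3P [vx vy vz].
  have : size [:: x; y; z; v] <= #|Vi f 2|.
    apply: card_list; last by rewrite /= xS yS zS vS.
    by rewrite /= !inE !negb_or nxy (eq_sym x z) nzx nyz (eq_sym x v) (eq_sym y v) (eq_sym z v) vx vy vz.
  by rewrite C2.
have n1 : forall v, fval f v != 1.
  move=> v; apply/negP => /eqP F; have : v \in Vi f 1 by rewrite inVi F.
  by rewrite V1e inE.
have Sh : Shyp e d (Vi f 2) x y z.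
  split => //; split => // v.
    rewrite inVi => v2.
    have F0 : fval f v = 0.
      by move: v2 (n1 v) (fval_lt3 f v); case: (fval f v) => [|[|[|]]].
    by have [u [Evu Fu]] := T.1 _ F0; exists u; rewrite ?inVi ?Fu.
  rewrite inVi => /eqP v2.
  have v0 : 0 < fval f v by rewrite v2.
  have [u [Evu Fu]] := T.2 v v0.
  exists u => //; rewrite inVi.
  by move: Fu (n1 u) (fval_lt3 f u); case: (fval f u) => [|[|[|]]].
have Sh' := Shyp_perm2 Sh.
have Sh2 := Shyp_perm1 Sh.
have Sh3 := Shyp_perm1 Sh'.
have Sh4 := Shyp_perm2 Sh2.
have a12 : x.1 != y.1 by apply/eqP; exact: D1 se sd Sh.
have a13 : x.1 != z.1 by apply/eqP; exact: D1 se sd Sh'.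
have a23 : y.1 != z.1 by apply/eqP; exact: D1 se sd Sh4.
have b12 : x.2 != y.2 by apply/eqP; exact: D2 se sd Sh.
have b13 : x.2 != z.2 by apply/eqP; exact: D2 se sd Sh'.
have b23 : y.2 != z.2 by apply/eqP; exact: D2 se sd Sh4.
have a21 : y.1 != x.1 by rewrite eq_sym.
have a31 : z.1 != x.1 by rewrite eq_sym.
have a32 : z.1 != y.1 by rewrite eq_sym.
have b21 : y.2 != x.2 by rewrite eq_sym.
have b31 : z.2 != x.2 by rewrite eq_sym.
have b32 : z.2 != y.2 by rewrite eq_sym.
split.
  apply: (@TC_of3 _ _ x.1 y.1 z.1 se.2) => g.
  have K1 := D3 se sd HW Sh a12 a13 b12 b13 (g:=g).
  have K2 := D3 se sd HW Sh2 a21 a23 b21 b23 (g:=g).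
  have K3 := D3 se sd HW Sh3 a31 a32 b31 b32 (g:=g).
  move: K1 K2 K3; case: (e g x.1); case: (e g y.1); case: (e g z.1) => //= K1 K2 K3;
    first [by exfalso; apply: K1 | by exfalso; apply: K2 | by exfalso; apply: K3].
apply: (@TC_of3 _ _ x.2 y.2 z.2 sd.2) => h.
have K1 := D4 se sd HV Sh a12 a13 b12 b13 (h:=h).
have K2 := D4 se sd HV Sh2 a21 a23 b21 b23 (h:=h).
have K3 := D4 se sd HV Sh3 a31 a32 b31 b32 (h:=h).
move: K1 K2 K3; case: (d h x.2); case: (d h y.2); case: (d h z.2) => //= K1 K2 K3;
  first [by exfalso; apply: K1 | by exfalso; apply: K2 | by exfalso; apply: K3].
Qed.

Lemma lower (V W : finType) (e : rel V) (d : rel W) f :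
  simple_graph e -> simple_graph d -> 3 <= #|V| -> 3 <= #|W| ->
  is_TRDF (direct_prod e d) f -> 6 <= weight f.
Proof.
move=> se sd HV HW T; rewrite weightE.
case C2: #|Vi f 2| => [|[|[|n]]].
- have := V2_0 T C2; have : 9 <= #|V| * #|W| by apply: (@leq_mul 3 3).
  lia.
- have := V2_1 se sd HV HW T C2; lia.
- have [H _] := V2_2 se sd HV HW T C2; lia.
- lia.
Qed.

Theorem theorem3p3 (V W : finType) (e : rel V) (d : rel W)
  (f : {ffun (V * W)%type -> 'I_3}) :
  simple_graph e -> simple_graph d ->
  no_isolated e -> no_isolated d ->
  3 <= #|V| -> 3 <= #|W| ->
  is_gamma_tR_function (direct_prod e d) f ->
  (forall g, is_gamma_tR_function (direct_prod e d) g ->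
     #|Vi g 2| <= #|Vi f 2|) ->
  [/\ (triangle_centered e /\ triangle_centered d) <->
        gamma_tR (direct_prod e d) = 6,
      gamma_tR (direct_prod e d) = 6 <-> #|Vi f 1 :|: Vi f 2| = 3 &
      (triangle_centered e /\ triangle_centered d) <->
        #|Vi f 1 :|: Vi f 2| = 3].
Proof.
move=> se sd _ _ HV HW [Tf wf] Hmax.
have L6 : 6 <= weight f := lower se sd HV HW Tf.
have A : triangle_centered e /\ triangle_centered d ->
    gamma_tR (direct_prod e d) = 6 /\ 3 <= #|Vi f 2|.
  move=> [te td]; have [g [Tg wg cg]] := TC_construct se sd te td.
  have Hg := gamma_le Tg.
  have G6 : gamma_tR (direct_prod e d) = 6 by rewrite -wf in L6 *; lia.
  split => //; rewrite -cg; apply: Hmax; split => //; by rewrite wg.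
have Bq : #|Vi f 1 :|: Vi f 2| = 3 ->
    [/\ #|Vi f 1| = 0, #|Vi f 2| = 3 & gamma_tR (direct_prod e d) = 6].
  rewrite cardS12 => H; move: L6; rewrite -wf weightE => L6.
  split; lia.
have Dq : gamma_tR (direct_prod e d) = 6 -> #|Vi f 1 :|: Vi f 2| = 3.
  move=> G6; have W6 : #|Vi f 1| + 2 * #|Vi f 2| = 6 by rewrite -weightE wf.
  rewrite cardS12.
  case C2: #|Vi f 2| W6 => [|[|[|n]]] W6.
  - have := V2_0 Tf C2; have : 9 <= #|V| * #|W| by apply: (@leq_mul 3 3).
    lia.
  - have := V2_1 se sd HV HW Tf C2; lia.
  - have [_ H] := V2_2 se sd HV HW Tf C2.
    have [_] := A (H ltac:(lia)); rewrite C2 //.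
  - lia.
have Cq : #|Vi f 1 :|: Vi f 2| = 3 -> triangle_centered e /\ triangle_centered d.
  by move/Bq => [C1 C2 _]; apply: V2_3 se sd HV HW Tf C1 C2.
split; split.
- by move/A => [].
- by move/Dq/Cq.
- exact: Dq.
- by move/Bq => [].
- by move/A => [/Dq].
- exact: Cq.
Qed.
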